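(* Let $\nu$ be an infinite cardinal, let $\mu=\operatorname{cf}(\nu)$, and let $\lambda$ be a cardinal. If $\mu\not\to_{hc}(\mu)^2_\lambda$, then $\nu\not\to_{hc}(\nu)^2_\lambda$.
   Context: $[S]^2$ denotes the set of $2$-element subsets of $S$. A graph $G=(V,E)$ is highly connected if for every $D\subseteq V$ with $|D|<|V|$ the graph induced on $V\setminus D$ is connected. For cardinals $\nu,\mu,\lambda$, $\nu\to_{hc}(\mu)^2_\lambda$ means: for every $c:[\nu]^2\to\lambda$ there exist $\xi<\lambda$ and $X\subseteq\nu$ with $|X|=\mu$ such that $(X,c^{-1}(\xi)\cap[X]^2)$ is highly connected; $\not\to_{hc}$ is its negation. *)

(* Defs.v *)
(* cardinals are represented by types; subsets by predicates. *)
From Stdlib Require Import List Relations Wellfounded.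

Set Implicit Arguments.

Definition card_le (A B : Type) : Prop :=
  exists f : A -> B, forall a a', f a = f a' -> a = a'.

Definition equinum (A B : Type) : Prop :=
  exists f : A -> B,
    (forall a a', f a = f a' -> a = a') /\ (forall b, exists a, f a = b).

Definition card_lt (A B : Type) : Prop := card_le A B /\ ~ card_le B A.

Definition infinite_type (A : Type) : Prop :=
  ~ (exists l : list A, forall x, In x l).

Definition strict_well_order (V : Type) (R : V -> V -> Prop) : Prop :=
  (forall x, ~ R x x) /\
  (forall x y z, R x y -> R y z -> R x z) /\
  (forall x y, R x y \/ x = y \/ R y x) /\
  well_founded R.

(* (V, R) is an initial ordinal, i.e. the von Neumann cardinal |V|:
   every proper initial segment has cardinality < |V|. *)
Definition initial_ordinal (V : Type) (R : V -> V -> Prop) : Prop :=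
  strict_well_order R /\ forall x, card_lt {y : V | R y x} V.

Definition cofinal (V : Type) (R : V -> V -> Prop) (C : V -> Prop) : Prop :=
  forall v, exists c, C c /\ (v = c \/ R v c).

Definition is_cofinality (V : Type) (R : V -> V -> Prop) (M : Type) : Prop :=
  (exists C : V -> Prop, cofinal R C /\ equinum {x : V | C x} M) /\
  (forall C : V -> Prop, cofinal R C -> card_le M {x : V | C x}).

Definition connected_on (V : Type) (S : V -> Prop) (E : V -> V -> Prop) : Prop :=
  forall x y, S x -> S y ->
    clos_refl_trans V (fun a b => S a /\ S b /\ E a b) x y.

Definition highly_connected (V : Type) (X : V -> Prop) (E : V -> V -> Prop) : Prop :=
  forall D : V -> Prop, (forall x, D x -> X x) ->
    card_lt {x : V | D x} {x : V | X x} ->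
    connected_on (fun x => X x /\ ~ D x) E.

(* nu ->_hc (mu)^2_lambda, where nu, mu, lambda are the cardinalities of V, M, L.
   A colouring of [V]^2 is represented by a symmetric c : V -> V -> L
   (its values on the diagonal are irrelevant). *)
Definition arrow_hc (V M L : Type) : Prop :=
  forall c : V -> V -> L, (forall x y, c x y = c y x) ->
    exists (xi : L) (X : V -> Prop),
      equinum {x : V | X x} M /\
      highly_connected X (fun a b => a <> b /\ c a b = xi).

(* Main.v *)
Require Import Defs.
From Stdlib Require Import List Relations Wellfounded.
From Stdlib Require Import Classical ClassicalEpsilon ProofIrrelevance.

Lemma card_le_trans' (A B C : Type) : card_le A B -> card_le B C -> card_le A C.
Proof.
  intros [f Hf] [g Hg]. exists (fun a => g (f a)). intros a a' H. auto.
Qed.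

Lemma sig_inj (A : Type) (P : A -> Prop) (a b : {x | P x}) :
  proj1_sig a = proj1_sig b -> a = b.
Proof.
  destruct a as [a pa], b as [b pb]; simpl; intros ->. f_equal. apply proof_irrelevance.
Qed.

Section SB.
Variables (A B : Type) (f : A -> B) (g : B -> A).
Hypothesis finj : forall a a', f a = f a' -> a = a'.
Hypothesis ginj : forall b b', g b = g b' -> b = b'.

Inductive Cset : A -> Prop :=
| Cbase a : ~ (exists b, g b = a) -> Cset a
| Cstep a : Cset a -> Cset (g (f a)).

Lemma notC_ex a : ~ Cset a -> exists b, g b = a.
Proof. intros H. apply NNPP. intros H'. apply H. now constructor. Qed.

Definition hSB (a : A) : B :=
  match excluded_middle_informative (Cset a) with
  | left _ => f a
  | right H => proj1_sig (constructive_indefinite_description _ (notC_ex a H))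
  end.

Lemma hSB_bij : (forall a a', hSB a = hSB a' -> a = a') /\ (forall b, exists a, hSB a = b).
Proof.
  split.
  - intros a a'. unfold hSB.
    destruct (excluded_middle_informative (Cset a)) as [Ha|Ha];
    destruct (excluded_middle_informative (Cset a')) as [Ha'|Ha'].
    + apply finj.
    + destruct (constructive_indefinite_description _ (notC_ex a' Ha')) as [b Hb]; simpl.
      intros E. subst b. exfalso. apply Ha'. rewrite <- Hb. now constructor.
    + destruct (constructive_indefinite_description _ (notC_ex a Ha)) as [b Hb]; simpl.
      intros E. subst b. exfalso. apply Ha. rewrite <- Hb. now constructor.
    + destruct (constructive_indefinite_description _ (notC_ex a Ha)) as [b Hb]; simpl.
      destruct (constructive_indefinite_description _ (notC_ex a' Ha')) as [b' Hb']; simpl.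
      intros E. subst. reflexivity.
  - intros b. destruct (classic (Cset (g b))) as [H|H].
    + inversion H as [a0 Hn E|a Ha E].
      * exfalso. apply Hn. now exists b.
      * apply ginj in E. exists a. unfold hSB.
        destruct (excluded_middle_informative (Cset a)) as [_|Hn]; [auto|contradiction].
    + exists (g b). unfold hSB.
      destruct (excluded_middle_informative (Cset (g b))) as [Hc|Hn]; [contradiction|].
      destruct (constructive_indefinite_description _ (notC_ex (g b) Hn)) as [b' Hb']; simpl.
      auto.
Qed.
End SB.

Lemma SB_equinum (A B : Type) : card_le A B -> card_le B A -> equinum A B.
Proof.
  intros [f Hf] [g Hg]. exists (@hSB A B f g). apply hSB_bij; auto.
Qed.

Theorem mainTheorem5 (V : Type) (R : V -> V -> Prop) (M L : Type) :
  infinite_type V ->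
  initial_ordinal R ->
  is_cofinality R M ->
  ~ arrow_hc M M L ->
  ~ arrow_hc V V L.
Proof.
  intros _ [[Hirr [Htr [Htri _]]] Hseg] [[C [HCcof [f [finj fsurj]]]] Hcofmin] HnotM HV.
  apply HnotM. intros c csym.
  pose (pf := fun v => constructive_indefinite_description _ (HCcof v)).
  pose (p := fun v => exist C (proj1_sig (pf v)) (proj1 (proj2_sig (pf v)))).
  assert (le_p : forall v, v = proj1_sig (p v) \/ R v (proj1_sig (p v))).
  { intros v. exact (proj2 (proj2_sig (pf v))). }
  clearbody p. clear pf.
  pose (q := fun v => f (p v)).
  destruct (HV (fun u v => c (q u) (q v))) as [xi [X [[e [einj esurj]] hcX]]].
  { intros; apply csym. }
  pose (einv := fun v => proj1_sig (constructive_indefinite_description _ (esurj v))).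
  assert (einvK : forall v, e (einv v) = v).
  { intros v. unfold einv. destruct (constructive_indefinite_description _ (esurj v)); auto. }
  clearbody einv.
  assert (KEY : forall P : V -> Prop,
    ~ cofinal R (fun v => exists x, X x /\ P x /\ proj1_sig (p x) = v) ->
    ~ card_le {x | X x} {x | X x /\ P x}).
  { intros P Hnc [k Hk]. apply Hnc. intros v0. apply NNPP. intros Hn.
    assert (Hb : forall x, X x -> P x -> R x v0).
    { intros x Xx Px.
      assert (Hc : R (proj1_sig (p x)) v0).
      { destruct (Htri (proj1_sig (p x)) v0) as [H|[H|H]]; auto; exfalso; apply Hn;
        exists (proj1_sig (p x)); split; eauto. }
      destruct (le_p x) as [E|E].
      - rewrite E; auto.
      - eauto. }
    apply (proj2 (Hseg v0)).
    exists (fun v => let z := k (einv v) in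
            exist (fun y => R y v0) (proj1_sig z)
              (Hb _ (proj1 (proj2_sig z)) (proj2 (proj2_sig z)))).
    intros a a' E. apply (f_equal (@proj1_sig _ _)) in E. simpl in E. apply sig_inj in E. apply Hk in E.
    rewrite <- (einvK a), <- (einvK a'). now rewrite E. }
  assert (INJ : forall P : V -> Prop,
    cofinal R (fun v => exists x, X x /\ P x /\ proj1_sig (p x) = v) ->
    card_le M {m | exists x, X x /\ P x /\ q x = m}).
  { intros P Hc. destruct (Hcofmin _ Hc) as [g Hg].
    pose (ch := fun m => constructive_indefinite_description _ (proj2_sig (g m))).
    exists (fun m => exist (fun m => exists x, X x /\ P x /\ q x = m) (q (proj1_sig (ch m)))
      (ex_intro _ (proj1_sig (ch m)) (conj (proj1 (proj2_sig (ch m)))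
         (conj (proj1 (proj2 (proj2_sig (ch m)))) eq_refl)))).
    intros m m' E. simpl in E. apply (f_equal (@proj1_sig _ _)) in E. simpl in E.
    unfold q in E. apply finj in E. apply Hg. apply sig_inj.
    destruct (ch m) as [x [X1 [P1 Ex]]]. destruct (ch m') as [x' [X2 [P2 Ex']]]. simpl in E.
    rewrite <- Ex, <- Ex'. now rewrite E. }
  exists xi, (fun m => exists x, X x /\ True /\ q x = m).
  split.
  - apply SB_equinum.
    + exists (@proj1_sig _ _). apply sig_inj.
    + apply INJ. apply NNPP. intros Hn. apply (KEY _ Hn).
      exists (fun z => exist (fun x => X x /\ True) (proj1_sig z) (conj (proj2_sig z) I)).
      intros a a' E. apply (f_equal (@proj1_sig _ _)) in E. now apply sig_inj.
  - intros D Dsub [_ Dnot].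
    pose (D'' := fun x => X x /\ D (q x)).
    assert (Hlt : card_lt {x | D'' x} {x | X x}).
    { split.
      - exists (fun z => exist X (proj1_sig z) (proj1 (proj2_sig z))).
        intros a a' E. apply (f_equal (@proj1_sig _ _)) in E. now apply sig_inj.
      - apply KEY. intros Hc. apply Dnot. apply INJ in Hc.
        eapply card_le_trans'; [|eapply card_le_trans'; [exact Hc|]].
        + exists (@proj1_sig _ _). apply sig_inj.
        + exists (fun z => exist D (proj1_sig z)
             (match proj2_sig z with ex_intro _ x (conj _ (conj Dx Ex)) =>
                eq_ind _ D Dx _ Ex end)).
          intros a a' E. apply (f_equal (@proj1_sig _ _)) in E. now apply sig_inj. }
    specialize (hcX D'' (fun x H => proj1 H) Hlt).
    intros m1 m2 [[x1 [Hx1 [_ E1]]] nD1] [[x2 [Hx2 [_ E2]]] nD2].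
    subst m1 m2.
    assert (nD1' : ~ D'' x1) by (intros [_ H]; auto).
    assert (nD2' : ~ D'' x2) by (intros [_ H]; auto).
    specialize (hcX x1 x2 (conj Hx1 nD1') (conj Hx2 nD2')).
    clear - hcX D''.
    induction hcX as [a b [[Xa nDa] [[Xb nDb] [nab cab]]] | a | a b d _ IH1 _ IH2].
    + assert (Sa : (exists x, X x /\ True /\ q x = q a) /\ ~ D (q a)).
      { split; [exists a; auto|]. intros H; apply nDa; split; auto. }
      assert (Sb : (exists x, X x /\ True /\ q x = q b) /\ ~ D (q b)).
      { split; [exists b; auto|]. intros H; apply nDb; split; auto. }
      destruct (classic (q a = q b)) as [E|E].
      * rewrite E. apply rt_refl.
      * apply rt_step. repeat split; auto; apply Sa || apply Sb.
    + apply rt_refl.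
    + eapply rt_trans; [apply IH1|apply IH2].
Qed.
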